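(* Let $n\ge 2$, let $P_n$ be the path with vertices $x_1,\dots,x_n$ and edges $\{x_i,x_{i+1}\}$, let $\mathcal C$ be a maximal independent set of $P_n$ with $c:=|\mathcal C|$, and let $G$ be the $\mathcal C$-suspension of $P_n$. Let $\alpha:=\lceil n/2\rceil$, $b_n:=(-1)^{\lceil n/2\rceil}P_{P_n}(-1)$, $\delta_0=0$ if $x_1\in\mathcal C$ and $1$ otherwise, $\delta_t=0$ if $x_n\in\mathcal C$ and $1$ otherwise, and $\delta:=\delta_0+\delta_t$. Then: (a) If $n\equiv 0,2\pmod 3$, then $\mathfrak a(G)=0$ and $h_{\alpha(G)}(G)=-b_n$ if $c+\delta=\alpha+1$, while $h_{\alpha(G)}(G)=b_n$ if $c+\delta\le\alpha$. (b) If $n=3k+1$ and $\mathcal C=\{x_1,x_4,\dots,x_{3k+1}\}$, then $\mathfrak a(G)=0$ and $h_{\alpha(G)}(G)=(-1)^{\alpha+k+1}$. (c) In all remaining cases, $\mathfrak a(G)<0$.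
   Context: For $\varnothing\ne C\subseteq V(G)$, the $C$-suspension of $G$ is obtained by adding a new vertex $z$ adjacent exactly to the vertices of $C$. The independence polynomial is $P_G(x)=\sum_i g_ix^i$, $g_i$ the number of independent sets of size $i$. For $G$ on vertex set $[N]$, let $S=K[y_1,\dots,y_N]$ ($K$ a field), $I(G)$ the edge ideal generated by $y_iy_j$ for edges $\{i,j\}$, $\alpha(G)$ the independence number (equal to $\dim S/I(G)$), and write the Hilbert series of $S/I(G)$ uniquely as $h_G(t)/(1-t)^{\alpha(G)}$ with $h_G(t)=\sum_i h_i(G)t^i$ a polynomial with nonzero leading coefficient ($h_i(G)=0$ for $i>\deg h_G$). The $\mathfrak a$-invariant is $\mathfrak a(G)=\deg h_G(t)-\alpha(G)$, and $h_{\alpha(G)}(G)$ is the coefficient of $t^{\alpha(G)}$ in $h_G(t)$. *)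

(* Defs.v *)
From mathcomp Require Import all_boot all_order all_algebra.
Set Implicit Arguments. Unset Strict Implicit. Unset Printing Implicit Defensive.
Import Order.TTheory GRing.Theory Num.Theory.

(* Simple graphs: a (symmetric, irreflexive) relation e on a finite type T. *)

Definition indep (T : finType) (e : rel T) (A : {set T}) : bool :=
  [forall x in A, forall y in A, ~~ e x y].

Definition max_indep (T : finType) (e : rel T) (C : {set T}) : bool :=
  indep e C && [forall x, (x \notin C) ==> ~~ indep e (x |: C)].

Definition indep_num (T : finType) (e : rel T) : nat :=
  \max_(A : {set T} | indep e A) #|A|.

Definition indep_poly (T : finType) (e : rel T) : {poly int} :=
  (\sum_(A : {set T} | indep e A) 'X^#|A|)%R.

(* The path P_n on vertices 'I_n (vertex i stands for x_{i+1}). *)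
Definition path_rel (n : nat) : rel 'I_n :=
  fun i j => (i.+1 == j :> nat) || (j.+1 == i :> nat).

(* C-suspension: new vertex z = None adjacent exactly to the vertices of C. *)
Definition suspension (T : finType) (e : rel T) (C : {set T}) : rel (option T) :=
  fun u v => match u, v with
             | Some x, Some y => e x y
             | Some x, None => x \in C
             | None, Some y => y \in C
             | None, None => false
             end.

(* Hilbert function of S/I(G), S = K[y_v : v in T]: the monomials not in the
   monomial ideal I(G) form a K-basis of S/I(G), so dim_K (S/I(G))_d is the
   number of exponent vectors m : T -> nat of total degree d such that the
   monomial y^m is not divisible by any y_u y_v with {u,v} an edge
   (for a loopless graph: not both m u > 0 and m v > 0).  Exponents of a
   monomial of degree d are < d.+1, so {ffun T -> 'I_d.+1} covers them all. *)
Definition standard_monomial (T : finType) (e : rel T) (d : nat)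
    (m : {ffun T -> 'I_d.+1}) : bool :=
  (\sum_(v : T) (m v : nat) == d)%N &&
  [forall u, forall v, e u v ==> ~~ ((0 < m u)%N && (0 < m v)%N)].

Definition hilb_fun (T : finType) (e : rel T) (d : nat) : nat :=
  #|[set m : {ffun T -> 'I_d.+1} | standard_monomial e m]|.

(* Coefficients of HS(t) * (1-t)^alpha(G), where HS(t) = sum_d H(d) t^d.
   These are the coefficients h_i(G) of the h-polynomial h_G(t). *)
Definition hcoef (T : finType) (e : rel T) (i : nat) : int :=
  (\sum_(j < i.+1) (-1) ^+ j * ('C(indep_num e, j))%:Z * (hilb_fun e (i - j))%:Z)%R.

Definition is_hpoly (T : finType) (e : rel T) (p : {poly int}) : Prop :=
  forall i, (p`_i)%R = hcoef e i.

Definition a_inv_of (T : finType) (e : rel T) (p : {poly int}) : int :=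
  ((size p).-1)%:Z - (indep_num e)%:Z.

(* Main.v *)
Require Import Defs.
From mathcomp Require Import all_boot all_order all_algebra.
From mathcomp Require Import ring zify.
Import Order.TTheory GRing.Theory Num.Theory.

Module Part1.
Set Implicit Arguments. Unset Strict Implicit. Unset Printing Implicit Defensive.

Local Open Scope ring_scope.

Definition cgr (k : nat) (p q : {poly int}) := exists r, p = q + r * 'X^k.

Lemma cgr_refl k p : cgr k p p. Proof. by exists 0; rewrite mul0r addr0. Qed.
Lemma cgr_coef k p q i : cgr k p q -> (i < k)%N -> p`_i = q`_i.
Proof. by case=> r ->; rewrite coefD coefMXn => ->; rewrite addr0. Qed.
Lemma cgrM k p q p' q' : cgr k p q -> cgr k p' q' -> cgr k (p * p') (q * q').
Proof. case=> r -> [r' ->]; exists (r * q' + q * r' + r * r' * 'X^k); ring. Qed.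
Lemma cgrX k p q m : cgr k p q -> cgr k (p ^+ m) (q ^+ m).
Proof.
move=> h; elim: m => [|m IH]; first exact: cgr_refl.
by rewrite !exprS; apply: cgrM.
Qed.

Definition Bp (N : nat) : {poly int} := \sum_(r < N.+1 | (0 < r)%N) 'X^r.

Lemma BpS N : Bp N.+1 = Bp N + 'X^(N.+1).
Proof. by rewrite /Bp big_mkcond big_ord_recr /= -big_mkcond. Qed.

Lemma Bp0 : Bp 0 = 0.
Proof. by rewrite /Bp big_mkcond big_ord_recr big_ord0 /= add0r. Qed.

Lemma Bp_mul N : (1 - 'X) * Bp N = 'X - 'X^(N.+1).
Proof.
elim: N => [|N IH]; first by rewrite Bp0 mulr0 expr1 subrr.
rewrite BpS mulrDr IH [in RHS]exprS; ring.
Qed.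

Lemma Bp_cgr d N : (d <= N)%N -> cgr d.+1 (Bp N) (Bp d).
Proof.
move=> /subnK <-; elim: (N - d)%N => [|m [r Hr]]; first exact: cgr_refl.
rewrite addSn BpS Hr; exists (r + 'X^m).
by rewrite -addnS exprD; ring.
Qed.

Lemma coef_1subX m j : ((1 - 'X) ^+ m : {poly int})`_j = (-1) ^+ j * ('C(m, j))%:Z.
Proof.
elim: m j => [|m IH] j.
  by rewrite expr0 coef1; case: j => [|j]; rewrite ?bin0 ?bin0n /=; ring.
rewrite exprSr mulrBr mulr1 coefB coefMX IH.
case: j => [|j] /=; first by rewrite !bin0 subr0.
rewrite IH binS PoszD exprS; ring.
Qed.

End Part1.

Module Part2.
Set Implicit Arguments. Unset Strict Implicit. Unset Printing Implicit Defensive.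
Import Part1.

Local Open Scope ring_scope.

Lemma std_indep (T : finType) (e : rel T) d (m : {ffun T -> 'I_d.+1}) :
  [forall u, forall v, e u v ==> ~~ ((0 < m u)%N && (0 < m v)%N)] =
  indep e [set v | (0 < m v)%N].
Proof.
rewrite /indep; apply/forallP/forallP => H u.
  apply/implyP; rewrite inE => hu; apply/forallP => v; apply/implyP; rewrite inE => hv.
  by move: (forallP (H u) v); rewrite hu hv; case: (e u v).
apply/forallP => v; apply/implyP => euv; apply/negP => /andP [hu hv].
have := H u; rewrite inE hu /= => /forallP /(_ v); rewrite inE hv /=.
by rewrite euv.
Qed.

Lemma prod_eqb (T : finType) (S A : {set T}) :
  (\prod_(v : T) nat_of_bool ((v \in S) == (v \in A)))%N = nat_of_bool (S == A).
Proof.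
case: eqP => [<-|neq]; first by rewrite big1 // => v _; rewrite eqxx.
have [v hv] : exists v, (v \in S) != (v \in A).
  apply/existsP; apply: contra_notT neq => /existsPn H; apply/setP => v.
  by move: (H v); rewrite negbK => /eqP.
by rewrite (bigD1 v) //= (negbTE hv) mul0n.
Qed.

Lemma hilb_sum (T : finType) (e : rel T) d :
  (hilb_fun e d)%:Z = \sum_(A : {set T} | indep e A) ((Bp d) ^+ #|A|)`_d.
Proof.
have step (A : {set T}) : (Bp d) ^+ #|A| = \sum_(f : {ffun T -> 'I_d.+1})
   'X^(\sum_v (f v : nat)) *+ (\prod_v nat_of_bool ((v \in [set v | (0 < f v)%N]) == (v \in A))).
  transitivity (\prod_(v in A) Bp d); first by rewrite prodr_const.
  
  transitivity (\prod_v \sum_(r : 'I_d.+1) ('X^r : {poly int}) *+ ((0 < r)%N == (v \in A))).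
    rewrite big_mkcond; apply: eq_bigr => v _; case: (v \in A).
      by rewrite /Bp big_mkcond; apply: eq_bigr => r _; rewrite eqb_id mulrb.
    by rewrite big_ord_recl /= big1 ?addr0.
  rewrite (bigA_distr_bigA (fun v (r : 'I_d.+1) => ('X^r : {poly int}) *+ ((0 < r)%N == (v \in A)))); apply: eq_bigr => f _; rewrite prodrMn prodrXr.
  by congr (_ *+ _); apply: eq_bigr => v _; rewrite inE.
under eq_bigr => A _ do rewrite step coef_sum.
rewrite exchange_big /=.
rewrite /hilb_fun -sum1dep_card -natz natr_sum big_mkcond /=.
apply: eq_bigr => f _.
under eq_bigr => A _ do rewrite coefMn coefXn prod_eqb.
rewrite big_mkcond /= (bigD1 [set v | (0 < f v)%N]) //= [X in _ + X]big1 ?addr0; last first.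
  by move=> A neq; rewrite eq_sym in neq; rewrite (negbTE neq) mulr0n; case: ifP.
rewrite /standard_monomial std_indep eqxx.
by rewrite eq_sym; case: (_ == _)%N; case: (indep _ _).
Qed.

Definition hp (T : finType) (e : rel T) : {poly int} :=
  \sum_(A : {set T} | indep e A) 'X^#|A| * (1 - 'X) ^+ (indep_num e - #|A|).

Lemma indep_le (T : finType) (e : rel T) (A : {set T}) : indep e A -> (#|A| <= indep_num e)%N.
Proof. by move=> h; rewrite /indep_num (leq_bigmax_cond A h). Qed.

Lemma hp_ok (T : finType) (e : rel T) : is_hpoly e (hp e).
Proof.
move=> i; rewrite /hcoef.
transitivity (((1 - 'X) ^+ indep_num e *
   \sum_(A : {set T} | indep e A) (Bp i) ^+ #|A|)`_i); last first.
  rewrite coefM; apply: eq_bigr => j _.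
  rewrite coef_1subX hilb_sum coef_sum; congr (_ * _).
  apply: eq_bigr => A _; apply: (cgr_coef (k := (i - j).+1)) => //.
  by apply: cgrX; apply: Bp_cgr; apply: leq_subr.
rewrite /hp big_distrr /= !coef_sum; apply: eq_bigr => A hA.
have hk := indep_le hA.
rewrite -[in RHS](subnK hk) exprD -mulrA -exprMn Bp_mul mulrC.
symmetry; apply: (cgr_coef (k := i.+1)) => //; apply: cgrM; first exact: cgr_refl.
by apply: cgrX; exists (-1); rewrite mulN1r.
Qed.

Lemma sign_sub a b : (b <= a)%N -> (-1) ^+ (a - b) = (-1) ^+ a * (-1) ^+ b :> int.
Proof.
by move=> h; rewrite -{2}(subnK h) exprD -mulrA -expr2 sqrr_sign mulr1.
Qed.

Lemma hp_top (T : finType) (e : rel T) :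
  (hp e)`_(indep_num e) = (-1) ^+ (indep_num e) * (indep_poly e).[-1].
Proof.
rewrite /hp coef_sum /indep_poly horner_sum mulr_sumr; apply: eq_bigr => A hA.
rewrite coefXnM ltnNge indep_le //= coef_1subX binn mulr1 hornerXn sign_sub //.
exact: indep_le.
Qed.

Lemma hp_size (T : finType) (e : rel T) : (size (hp e) <= (indep_num e).+1)%N.
Proof.
apply/leq_sizeP => j hj; rewrite /hp coef_sum big1 // => A hA.
rewrite coefXnM; case: ifP => // _; rewrite coef_1subX bin_small ?mulr0 //.
have hk := indep_le hA; lia.
Qed.

Lemma a_inv_zero (T : finType) (e : rel T) :
  (indep_poly e).[-1] != 0 -> a_inv_of e (hp e) = 0.
Proof.
move=> h.
have hs : size (hp e) = (indep_num e).+1.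
  apply/eqP; rewrite eqn_leq hp_size /=; apply: contraT; rewrite -leqNgt => /leq_sizeP.
  move=> /(_ _ (leqnn _)) /eqP; rewrite hp_top mulf_eq0 signr_eq0 /=.
  by rewrite (negbTE h).
by rewrite /a_inv_of hs /= subrr.
Qed.

Lemma a_inv_neg (T : finType) (e : rel T) :
  (0 < indep_num e)%N -> (indep_poly e).[-1] = 0 -> (a_inv_of e (hp e) < 0)%R.
Proof.
move=> h0 h.
have hs : (size (hp e) <= indep_num e)%N.
  apply/leq_sizeP => j; rewrite leq_eqVlt => /orP [/eqP <-|hj].
    by rewrite hp_top h mulr0.
  by move: (hp_size e) => /leq_sizeP; apply.
rewrite /a_inv_of subr_lt0 ltz_nat; case: (size _) hs => [|s] /=; lia.
Qed.

End Part2.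

Module Part3.
Set Implicit Arguments. Unset Strict Implicit. Unset Printing Implicit Defensive.
Import Part1.
Import Part2.


Fixpoint allb (n : nat) : seq (seq bool) :=
  if n is n'.+1 then [seq true :: s | s <- allb n'] ++ [seq false :: s | s <- allb n']
  else [:: [::]].

Lemma mem_allb n s : (s \in allb n) = (size s == n).
Proof.
elim: n s => [|n IH] s; first by case: s.
rewrite /= mem_cat; case: s => [|b s] /=.
  by apply/negP => /orP [] /mapP [x _].
case: b.
  rewrite (mem_map (fun a b (h : true :: a = true :: b) => congr1 behead h)) IH.
  by apply/orP/idP => [[//|/mapP [x _ //]]|]; left.
rewrite (mem_map (fun a b (h : false :: a = false :: b) => congr1 behead h)) IH.
by apply/orP/idP => [[/mapP [x _ //]|//]|]; right.
Qed.

Lemma uniq_allb n : uniq (allb n).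
Proof.
elim: n => [|n IH] //=; rewrite cat_uniq !map_inj_uniq //; last first.
- by move=> a b [].
- by move=> a b [].
rewrite IH andbT /=; apply/hasPn => s /mapP [x _ ->] /=.
by apply/mapP => [[y _ //]].
Qed.

Definition code (T : finType) (e : seq T) (A : {set T}) : seq bool := [seq x \in A | x <- e].

Lemma size_code (T : finType) (e : seq T) (A : {set T}) : size (code e A) = size e.
Proof. exact: size_map. Qed.

Lemma code_inj (T : finType) (e : seq T) : (forall x, x \in e) -> injective (code e).
Proof.
move=> he A B h; apply/setP => x.
have := congr1 (fun s => nth false s (index x e)) h.
by rewrite /code !(nth_map x) ?index_mem ?nth_index.
Qed.

Lemma perm_code (T : finType) (e : seq T) : uniq e -> (forall x, x \in e) ->
  perm_eq (map (code e) (enum {set T})) (allb (size e)).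
Proof.
move=> ue he; apply: uniq_perm.
- by rewrite map_inj_uniq ?enum_uniq //; apply: code_inj.
- exact: uniq_allb.
move=> s; rewrite mem_allb; apply/mapP/idP => [[A _ ->]|/eqP hs].
  by rewrite size_code.
case: e ue he hs => [|x0 e'] ue he hs.
  by exists set0; rewrite ?mem_enum //; case: s hs.
exists [set x | nth false s (index x (x0 :: e'))]; first by rewrite mem_enum.
apply: (@eq_from_nth _ false); first by rewrite size_code.
move=> i hi; rewrite /code (nth_map x0) -?hs // inE index_uniq // -hs.
exact: hi.
Qed.

Lemma big_sets (R : Type) (idx : R) (op : Monoid.com_law idx) (T : finType) (e : seq T)
  (P : pred (seq bool)) (F : seq bool -> R) : uniq e -> (forall x, x \in e) ->
  \big[op/idx]_(A : {set T} | P (code e A)) F (code e A) =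
  \big[op/idx]_(s <- allb (size e) | P s) F s.
Proof.
move=> ue he; rewrite -(perm_big _ (perm_code ue he)) big_map big_enum_cond /=.
by [].
Qed.

Lemma count_code (T : finType) (e : seq T) (A : {set T}) : uniq e -> (forall x, x \in e) ->
  count id (code e A) = #|A|.
Proof.
move=> ue he; rewrite count_map -size_filter.
have u : uniq (filter (mem A) e) := filter_uniq _ ue.
rewrite -(card_uniqP u); apply: eq_card => x.
by rewrite mem_filter he andbT.
Qed.

End Part3.

Module Part4.
Set Implicit Arguments. Unset Strict Implicit. Unset Printing Implicit Defensive.
Import Part1.
Import Part2.
Import Part3.


Fixpoint nocons (s : seq bool) : bool :=
  if s is a :: s' then ~~ (a && head false s') && nocons s' else true.
Fixpoint disj (s c : seq bool) : bool :=
  match s, c with a :: s', b :: c' => ~~ (a && b) && disj s' c' | _, _ => true end.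
Definition valid (c s : seq bool) := nocons s && disj s c.

Local Open Scope ring_scope.
Definition Wsum (c : seq bool) : int :=
  \sum_(s <- allb (size c) | valid c s) (-1) ^+ (count id s).
Definition Wh (c : seq bool) : int :=
  \sum_(s <- allb (size c) | ~~ head false s && valid c s) (-1) ^+ (count id s).
Local Close Scope ring_scope.
Definition Mmax (c : seq bool) : nat :=
  \max_(s <- allb (size c) | valid c s) count id s.
Definition Mh (c : seq bool) : nat :=
  \max_(s <- allb (size c) | ~~ head false s && valid c s) count id s.

Lemma nocons_nseq n : nocons (nseq n false).
Proof. by elim: n => [|n IH] //=. Qed.
Lemma disj_nseq n c : disj (nseq n false) c.
Proof. by elim: n c => [|n IH] [|b c] //=. Qed.
Lemma disj_nseqr n s : disj s (nseq n false).
Proof. by elim: n s => [|n IH] [|b s] //=; rewrite andbF IH. Qed.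
Lemma size_nseq_allb n : nseq n false \in allb n.
Proof. by rewrite mem_allb size_nseq. Qed.

Lemma bigmax_succ (I : Type) (r : seq I) (P : pred I) (F : I -> nat) :
  has P r -> \max_(i <- r | P i) (F i).+1 = (\max_(i <- r | P i) F i).+1.
Proof.
elim: r => [//|x r IH] /=; rewrite !big_cons.
case: (P x) => /=; last exact: IH.
case: (boolP (has P r)) => h; first by rewrite IH // maxnSS.
by rewrite !big_hasC // !maxn0.
Qed.

Local Open Scope ring_scope.
Lemma Wsum_nil : Wsum [::] = 1.
Proof. by rewrite /Wsum /= big_cons big_nil addr0. Qed.
Lemma Wh_nil : Wh [::] = 1.
Proof. by rewrite /Wh /= big_cons big_nil addr0. Qed.

Lemma Wsum_cons b c : Wsum (b :: c) = Wsum c - (if b then 0 else Wh c).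
Proof.
rewrite /Wsum /= big_cat /= !big_map /= addrC; congr (_ + _).
case: b => /=.
  by rewrite big_pred0 ?oppr0 // => s; rewrite /valid /= andbF.
rewrite /Wh -sumrN; apply: eq_big => [s|s _].
  by rewrite /valid /=; case: (head false s); case: (nocons s); case: (disj s c).
by rewrite add1n exprS mulN1r.
Qed.

Lemma Wh_cons b c : Wh (b :: c) = Wsum c.
Proof.
rewrite /Wh /Wsum /= big_cat /= !big_map /= big_pred0 ?add0r //.

Qed.
Local Close Scope ring_scope.

Lemma Mmax_nil : Mmax [::] = 0.
Proof. by rewrite /Mmax /= big_cons big_nil. Qed.
Lemma Mh_nil : Mh [::] = 0.
Proof. by rewrite /Mh /= big_cons big_nil. Qed.

Lemma has_valid c : has (valid c) (allb (size c)).
Proof.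
apply/hasP; exists (nseq (size c) false); first exact: size_nseq_allb.
by rewrite /valid nocons_nseq disj_nseq.
Qed.

Lemma Mmax_cons b c : Mmax (b :: c) = maxn (Mmax c) (if b then 0 else (Mh c).+1).
Proof.
rewrite /Mmax /= big_cat /= !big_map /= maxnC; congr maxn.
case: b => /=.
  by rewrite big_pred0 // => s; rewrite /valid /= andbF.
rewrite /Mh -bigmax_succ.
  by apply: eq_bigl => s; rewrite /valid /=; case: (head false s); case: (nocons s); case: (disj s c).
apply/hasP; exists (nseq (size c) false); first exact: size_nseq_allb.
by case: (size c) => [|k] //=; rewrite /valid (nocons_nseq k.+1) (disj_nseq k.+1).
Qed.

Lemma Mh_cons b c : Mh (b :: c) = Mmax c.
Proof.
rewrite /Mh /Mmax /= big_cat /= !big_map /= big_pred0 ?max0n //.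

Qed.

End Part4.

Module Part5.
Set Implicit Arguments. Unset Strict Implicit. Unset Printing Implicit Defensive.
Import Part1.
Import Part2.
Import Part3.
Import Part4.


Local Open Scope ring_scope.
Lemma Wsum3 c : Wsum [:: false, false, false & c] = - Wsum c.
Proof. rewrite Wsum_cons Wh_cons [Wsum [:: false, false & c]]Wsum_cons Wh_cons /=. by rewrite addrAC subrr sub0r. Qed.

Lemma Wsum_nseq q r : Wsum (nseq (3 * q + r) false) = (-1) ^+ q * Wsum (nseq r false).
Proof.
elim: q => [|q IH]; first by rewrite mul1r.
have -> : (3 * q.+1 + r = (3 * q + r).+3)%N by lia.
by rewrite /= Wsum3 IH exprS mulN1r mulNr.
Qed.

Lemma Wsum_nseq1 n : (n %% 3 = 1)%N -> Wsum (nseq n false) = 0.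
Proof.
move=> h; rewrite (divn_eq n 3) h mulnC Wsum_nseq.
by rewrite Wsum_cons Wsum_nil Wh_nil subrr mulr0.
Qed.

Lemma Wsum_nseq02 n : (n %% 3 = 0 \/ n %% 3 = 2)%N -> Wsum (nseq n false) != 0.
Proof.
move=> h; rewrite (divn_eq n 3) mulnC Wsum_nseq mulf_eq0 signr_eq0 /=.
case: h => ->.
  by rewrite Wsum_nil.
by rewrite /= Wsum_cons Wh_cons Wsum_cons Wsum_nil Wh_nil.
Qed.

Lemma Wsum_t r : Wsum (true :: r) = Wsum r.
Proof. by rewrite Wsum_cons subr0. Qed.
Lemma Wsum_ft r : Wsum [:: false, true & r] = 0.
Proof. by rewrite Wsum_cons Wh_cons Wsum_t subrr. Qed.
Lemma Wsum_fft r : Wsum [:: false, false, true & r] = - Wsum r.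
Proof. by rewrite Wsum_cons Wh_cons Wsum_ft Wsum_t sub0r. Qed.
Local Close Scope ring_scope.

Lemma Mmax_t r : Mmax (true :: r) = Mmax r.
Proof. by rewrite Mmax_cons maxn0. Qed.
Lemma Mmax_ft r : Mmax [:: false, true & r] = (Mmax r).+1.
Proof. by rewrite Mmax_cons Mh_cons Mmax_t maxnC (maxn_idPl (leqnSn _)). Qed.
Lemma Mmax_fft r : Mmax [:: false, false, true & r] = (Mmax r).+1.
Proof. by rewrite Mmax_cons Mh_cons Mmax_ft Mmax_t maxnn. Qed.

Lemma Mmax_nseq n : Mmax (nseq n false) = uphalf n.
Proof.
suff: Mmax (nseq n false) = uphalf n /\ Mmax (nseq n.+1 false) = uphalf n.+1 by case.
elim: n => [|n [IH1 IH2]].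
  by rewrite Mmax_nil /= Mmax_cons Mh_nil Mmax_nil.
split=> //.
rewrite /= Mmax_cons Mh_cons -/(nseq n.+1 false) IH2 IH1.
by apply/maxn_idPr; rewrite !uphalfE /= ltnS uphalf_half leq_addl.
Qed.

Inductive tailOK : seq bool -> Prop :=
| tok_nil : tailOK [::]
| tok_end : tailOK [:: false]
| tok_1 r : tailOK r -> tailOK [:: false, true & r]
| tok_2 r : tailOK r -> tailOK [:: false, false, true & r].

Lemma M_tail r : tailOK r -> Mmax r = count id r + ~~ last true r.
Proof.
elim=> {r} [|//|r _ IH|r _ IH].
- by rewrite Mmax_nil.
- by rewrite Mmax_cons Mh_nil Mmax_nil.
- by rewrite Mmax_ft IH /=; lia.
- by rewrite Mmax_fft IH /=; lia.
Qed.

Local Open Scope ring_scope.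
Lemma W_tail r : tailOK r -> Wsum r != 0 ->
  exists k, r = flatten (nseq k [:: false; false; true]) /\ Wsum r = (-1) ^+ k.
Proof.
elim=> {r} [|//|r _ IH|r _ IH].
- by move=> _; exists 0%N; rewrite Wsum_nil.
- by rewrite Wsum_cons Wh_nil Wsum_nil subrr eqxx.
- by rewrite Wsum_ft eqxx.
rewrite Wsum_fft oppr_eq0 => /IH [k [-> hk]]; exists k.+1; split=> //.
by rewrite hk exprS mulN1r.
Qed.
Local Close Scope ring_scope.

Lemma tailOK_flat k : tailOK (flatten (nseq k [:: false; false; true])).
Proof. elim: k => [|k IH] /=; [exact: tok_nil | exact: tok_2]. Qed.

Lemma count_flat k : count id (flatten (nseq k [:: false; false; true])) = k.
Proof. by elim: k => [|k IH] //=; rewrite IH. Qed.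

Lemma last_flat k : last true (flatten (nseq k [:: false; false; true])) = true.
Proof. by elim: k => [|k IH] //=. Qed.

Lemma size_flat k : size (flatten (nseq k [:: false; false; true])) = 3 * k.
Proof. by elim: k => [|k IH] //=; rewrite IH; lia. Qed.

Lemma iota3 j k : map (fun i => i %% 3 == 0) (iota (3 * j) (3 * k).+1) =
  true :: flatten (nseq k [:: false; false; true]).
Proof.
elim: k j => [|k IH] j.
  by rewrite /= (_ : (3 * j) %% 3 = 0) //; lia.
rewrite (_ : (3 * k.+1).+1 = 3 + (3 * k).+1); last by lia.
rewrite iotaD map_cat (_ : 3 * j + 3 = 3 * j.+1); last by lia.
rewrite IH /=.
rewrite (_ : (3 * j) %% 3 = 0); last by lia.
rewrite (_ : (3 * j).+1 %% 3 = 1); last by lia.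
by rewrite (_ : (3 * j).+2 %% 3 = 2); last by lia.
Qed.

Lemma tail_struct r : nocons (true :: r) ->
  (forall i, 0 < i -> i <= size r ->
     nth false (true :: r) i || nth false (true :: r) i.-1 || nth false (true :: r) i.+1) ->
  tailOK r.
Proof.
move: {2}(size r) (leqnn (size r)) => N; elim: N r => [|N IH] r hN hnc hd.
  by move: hN; rewrite leqn0 size_eq0 => /eqP ->; exact: tok_nil.
case: r hN hnc hd => [|b r1] hN hnc hd; first exact: tok_nil.
case: b hN hnc hd => hN hnc hd; first by [].
case: r1 hN hnc hd => [|c r2] hN hnc hd; first exact: tok_end.
case: c hN hnc hd => hN hnc hd.
  apply: tok_1; apply: IH.
  - by move: hN => /=; lia.
  - by move: hnc => /=.
  move=> [//|i] _ hi; exact: (hd i.+3).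
case: r2 hN hnc hd => [|d r3] hN hnc hd.
  by move: (hd 2 isT isT).
case: d hN hnc hd => hN hnc hd; last by move: (hd 2 isT isT).
apply: tok_2; apply: IH.
- by move: hN => /=; lia.
- by move: hnc => /=.
move=> [//|i] _ hi; exact: (hd i.+4).
Qed.

Lemma full_struct c : nocons c ->
  (forall i, i < size c -> nth false c i || ((0 < i) && nth false c i.-1) || nth false c i.+1) ->
  0 < size c ->
  exists r, tailOK r /\ (c = true :: r \/ c = [:: false, true & r]).
Proof.
case: c => [//|b r] hnc hd _.
case: b hnc hd => hnc hd.
  exists r; split; last by left.
  apply: tail_struct => // i hi hi'; have := hd i hi'; by rewrite hi.
case: r hnc hd => [|c r] hnc hd; first by move: (hd 0 isT).
case: c hnc hd => hnc hd; last by move: (hd 0 isT).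
exists r; split; last by right.
apply: tail_struct; first by move: hnc => /=.
move=> [//|i] _ hi; have := hd i.+2; rewrite /=; apply; lia.
Qed.

End Part5.

Module Part6.
Set Implicit Arguments. Unset Strict Implicit. Unset Printing Implicit Defensive.
Import Part1.
Import Part2.
Import Part3.
Import Part4.
Import Part5.


Lemma nocons_nth s : nocons s <-> (forall i, ~~ (nth false s i && nth false s i.+1)).
Proof.
elim: s => [|a s IH] /=; first by split=> // _ [].
split.
  case/andP => h1 /IH h2 [|i] //=; by case: s h1 {IH h2}.
move=> h; apply/andP; split; first by move: (h 0); case: s {IH h}.
by apply/IH => i; exact: (h i.+1).
Qed.

Lemma disj_nth s c : disj s c <-> (forall i, ~~ (nth false s i && nth false c i)).
Proof.
elim: s c => [|a s IH] c.
  by split=> // _ i; rewrite nth_nil.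
case: c => [|b c] /=.
  by split=> // _ i; rewrite nth_nil andbF.
split.
  by case/andP => h1 /IH h2 [|i] //=; apply: h2.
move=> h; apply/andP; split; first exact: (h 0).
by apply/IH => i; exact: (h i.+1).
Qed.

Lemma nth_code (n : nat) (B : {set 'I_n}) (i : 'I_n) : nth false (code (enum 'I_n) B) i = (i \in B).
Proof. by rewrite /code (nth_map i) ?size_enum_ord // nth_ord_enum. Qed.

Lemma nth_code_ge (n : nat) (B : {set 'I_n}) i : (n <= i)%N -> nth false (code (enum 'I_n) B) i = false.
Proof. by move=> h; rewrite nth_default // size_code size_enum_ord. Qed.

Lemma indep_path (n : nat) (B : {set 'I_n}) : indep (@path_rel n) B = nocons (code (enum 'I_n) B).
Proof.
apply/idP/idP.
  move=> h; apply/nocons_nth => i; case: (ltnP i.+1 n) => hi; last first.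
    by rewrite (nth_code_ge _ hi) andbF.
  move: (nth_code B (Ordinal (ltnW hi))) (nth_code B (Ordinal hi)) => /= -> ->.
  apply/negP => /andP [hu hv].
  move/forallP: h => /(_ (Ordinal (ltnW hi))) /implyP /(_ hu) /forallP /(_ (Ordinal hi)).
  by rewrite hv /path_rel /= eqxx.
move/nocons_nth => h; apply/forallP => x; apply/implyP => hx; apply/forallP => y.
apply/implyP => hy; rewrite /path_rel; apply/negP => /orP [] /eqP hxy.
  by have := h x; rewrite hxy !nth_code hx hy.
by have := h y; rewrite hxy !nth_code hx hy.
Qed.

Lemma disj_code (n : nat) (B C : {set 'I_n}) :
  disj (code (enum 'I_n) B) (code (enum 'I_n) C) = [forall i, (i \in B) ==> (i \notin C)].
Proof.
apply/idP/idP.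
  move/disj_nth => h; apply/forallP => i; apply/implyP => hi.
  by have := h i; rewrite !nth_code hi.
move/forallP => h; apply/disj_nth => i; case: (ltnP i n) => hi; last first.
  by rewrite (nth_code_ge _ hi).
move: (nth_code B (Ordinal hi)) (nth_code C (Ordinal hi)) => /= -> ->.
by case: (Ordinal hi \in B) (implyP (h (Ordinal hi))) => // /(_ isT) ->.
Qed.

Lemma nth_code_U (n : nat) (C : {set 'I_n}) (x : 'I_n) j :
  nth false (code (enum 'I_n) (x |: C)) j = (j == x) || nth false (code (enum 'I_n) C) j.
Proof.
case: (ltnP j n) => hj; last first.
  rewrite !nth_code_ge //; case: eqP => // hx; move: (ltn_ord x); lia.
move: (nth_code (x |: C) (Ordinal hj)) (nth_code C (Ordinal hj)) => /= -> ->.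
by rewrite in_setU1.
Qed.

Lemma dom_code (n : nat) (C : {set 'I_n}) : max_indep (@path_rel n) C ->
  forall i, (i < size (code (enum 'I_n) C))%N -> nth false (code (enum 'I_n) C) i ||
    ((0 < i)%N && nth false (code (enum 'I_n) C) i.-1) || nth false (code (enum 'I_n) C) i.+1.
Proof.
case/andP => hC /forallP hmax i; rewrite size_code size_enum_ord => hi.
apply: contraT => H.
have hx : Ordinal hi \notin C.
  by rewrite -(nth_code C (Ordinal hi)) /=; case: (nth _ _ i) H.
have := implyP (hmax (Ordinal hi)) hx; rewrite indep_path => /negP H2; exfalso; apply: H2; apply/nocons_nth => j.
rewrite !nth_code_U /=.
move: hC; rewrite indep_path => /nocons_nth hC.
case: (eqVneq j i) => [->|hji] /=.
  rewrite (gtn_eqF (ltnSn i)) /=.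
  by move: H; case: (nth _ _ i.+1); rewrite ?orbT.
case: (eqVneq j.+1 i) => [hj1|hj1] /=; last exact: hC.
rewrite andbT; move: H; rewrite -hj1 /=; case: (nth _ _ j) => //.
by rewrite orbT.
Qed.

Lemma indepG (T : finType) (e : rel T) (C : {set T}) (A : {set option T}) :
  indep (suspension e C) A = indep e [set i | Some i \in A] &&
    ((None \in A) ==> [forall i, (Some i \in A) ==> (i \notin C)]).
Proof.
apply/idP/idP.
  move=> h.
  have H x y : x \in A -> y \in A -> ~~ suspension e C x y.
    by move=> hx hy; move/forallP: h => /(_ x) /implyP /(_ hx) /forallP /(_ y) /implyP /(_ hy).
  apply/andP; split.
    apply/forallP => x; apply/implyP; rewrite inE => hx; apply/forallP => y.
    by apply/implyP; rewrite inE => hy; exact: (H _ _ hx hy).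
  by apply/implyP => hz; apply/forallP => i; apply/implyP => hi; exact: (H _ _ hi hz).
case/andP => h1 /implyP h2; apply/forallP => x; apply/implyP => hx; apply/forallP => y.
apply/implyP => hy.
case: x hx => [x|] hx; case: y hy => [y|] hy //=.
- move/forallP: h1 => /(_ x) /implyP; rewrite inE => /(_ hx) /forallP /(_ y) /implyP.
  by rewrite inE => /(_ hy).
- by move/forallP: (h2 hy) => /(_ x) /implyP /(_ hx).
- by move/forallP: (h2 hx) => /(_ y) /implyP /(_ hy).
Qed.

End Part6.

Module Part7.
Set Implicit Arguments. Unset Strict Implicit. Unset Printing Implicit Defensive.
Import Part1.
Import Part2.
Import Part3.
Import Part4.
Import Part5.
Import Part6.


Definition eG (n : nat) : seq (option 'I_n) := None :: map Some (enum 'I_n).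

Lemma uniq_eG n : uniq (eG n).
Proof.
rewrite /eG /= map_inj_uniq ?enum_uniq ?andbT; last by move=> a b [].
by apply/mapP => [[x _]].
Qed.

Lemma mem_eG n x : x \in eG n.
Proof. by case: x => [x|]; rewrite /eG inE // map_f ?orbT // mem_enum. Qed.

Lemma size_eG n : size (eG n) = n.+1.
Proof. by rewrite /= size_map size_enum_ord. Qed.

Lemma code_eG n (A : {set option 'I_n}) :
  code (eG n) A = (None \in A) :: code (enum 'I_n) [set i | Some i \in A].
Proof.
rewrite /code /= -map_comp; congr (_ :: _); apply: eq_map => i.
by rewrite /= inE.
Qed.

Definition validG (cm s : seq bool) :=
  if s is z :: s' then nocons s' && (z ==> disj s' cm) else false.

Lemma indepG_code n (C : {set 'I_n}) (A : {set option 'I_n}) :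
  indep (suspension (@path_rel n) C) A = validG (code (enum 'I_n) C) (code (eG n) A).
Proof.
rewrite indepG code_eG /= indep_path disj_code.
congr (_ && (_ ==> _)); apply: eq_forallb => i; by rewrite inE.
Qed.

Local Open Scope ring_scope.
Lemma PG n (C : {set 'I_n}) :
  (indep_poly (suspension (@path_rel n) C)).[-1] =
  Wsum (nseq n false) - Wsum (code (enum 'I_n) C).
Proof.
rewrite /indep_poly horner_sum.
under eq_bigr => A _ do rewrite hornerXn -(count_code A (uniq_eG n) (@mem_eG n)).
rewrite (eq_bigl (fun A => validG (code (enum 'I_n) C) (code (eG n) A))); last first.
  by move=> A; rewrite indepG_code.
rewrite (big_sets _ (validG (code (enum 'I_n) C)) (fun s => (-1) ^+ count id s) (uniq_eG n) (@mem_eG n)).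
rewrite size_eG /= big_cat /= !big_map /= addrC /Wsum size_code size_enum_ord size_nseq.
congr (_ + _).
  by apply: eq_bigl => s; rewrite /valid disj_nseqr andbT.
rewrite -sumrN; apply: eq_big => [s //|s _].
by rewrite add1n exprS mulN1r.
Qed.

Lemma Ppath n : (indep_poly (@path_rel n)).[-1] = Wsum (nseq n false).
Proof.
rewrite /indep_poly horner_sum.
have ue := enum_uniq 'I_n; have me : forall x : 'I_n, x \in enum 'I_n by move=> x; rewrite mem_enum.
under eq_bigr => A _ do rewrite hornerXn -(count_code A ue me).
rewrite (eq_bigl (fun A => nocons (code (enum 'I_n) A))); last first.
  by move=> A; rewrite indep_path.
rewrite (big_sets _ nocons (fun s => (-1) ^+ count id s) ue me).
rewrite /Wsum size_nseq size_enum_ord; apply: eq_bigl => s.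
by rewrite /valid disj_nseqr andbT.
Qed.
Local Close Scope ring_scope.

Lemma alphaG n (C : {set 'I_n}) :
  indep_num (suspension (@path_rel n) C) =
  maxn (Mmax (code (enum 'I_n) C)).+1 (Mmax (nseq n false)).
Proof.
rewrite /indep_num.
under eq_bigr => A _ do rewrite -(count_code A (uniq_eG n) (@mem_eG n)).
rewrite (eq_bigl (fun A => validG (code (enum 'I_n) C) (code (eG n) A))); last first.
  by move=> A; rewrite indepG_code.
rewrite (big_sets _ (validG (code (enum 'I_n) C)) (fun s => count id s) (uniq_eG n) (@mem_eG n)).
rewrite size_eG /= big_cat /= !big_map /= /Mmax size_code size_enum_ord size_nseq.
congr maxn.
  rewrite -bigmax_succ; first by apply: eq_bigl.
  by have := has_valid (code (enum 'I_n) C); rewrite size_code size_enum_ord.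
by apply: eq_bigl => s; rewrite /valid disj_nseqr andbT.
Qed.

End Part7.
Import Part1.
Import Part2.
Import Part3.
Import Part4.
Import Part5.
Import Part6.
Import Part7.
Unset Implicit Arguments. Set Strict Implicit.

Lemma W_flat k : Wsum (flatten (nseq k [:: false; false; true])) = ((-1) ^+ k)%R.
Proof.
elim: k => [|k IH]; first by rewrite Wsum_nil.
by rewrite /= Wsum_fft IH exprS mulN1r.
Qed.

Lemma code_set3 n : code (enum 'I_n) [set i : 'I_n | (i %% 3 == 0)%N] =
  map (fun m => (m %% 3 == 0)%N) (iota 0 n).
Proof.
rewrite /code (eq_map (g := fun i : 'I_n => ((val i) %% 3 == 0)%N)); last first.
  by move=> i; rewrite inE.
by rewrite (map_comp (fun m => (m %% 3 == 0)%N) val) val_enum_ord.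
Qed.

Theorem theorem7p3 (n : nat) (C : {set 'I_n}) (x1 xn : 'I_n) :
  (2 <= n)%N ->
  max_indep (@path_rel n) C ->
  (x1 : nat) = 0%N -> (xn : nat) = n.-1 ->
  let G := suspension (@path_rel n) C in
  let c := #|C| in
  let alpha := uphalf n in
  let b := ((-1) ^+ uphalf n * (indep_poly (@path_rel n)).[-1])%R in
  let delta := ((x1 \notin C) + (xn \notin C))%N in
  exists h : {poly int}, is_hpoly G h /\
  ( (n %% 3 == 0 \/ n %% 3 == 2)%N ->
      a_inv_of G h = 0%R /\
      ((c + delta = alpha.+1)%N -> (h`_(indep_num G))%R = (- b)%R) /\
      ((c + delta <= alpha)%N -> (h`_(indep_num G))%R = b) ) /\
  ( forall k : nat, n = (3 * k + 1)%N ->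
      C = [set i : 'I_n | (i %% 3 == 0)%N] ->
      a_inv_of G h = 0%R /\
      (h`_(indep_num G))%R = ((-1) ^+ (alpha + k + 1))%R ) /\
  ( (n %% 3 == 1)%N -> C != [set i : 'I_n | (i %% 3 == 0)%N] ->
      (a_inv_of G h < 0)%R ).
Proof.
move=> hn hmax hx1 hxn G c alpha b delta.
rewrite /G /c /alpha /b /delta {G c alpha b delta}.
exists (hp (suspension (@path_rel n) C)); split; first exact: hp_ok.
have ue := enum_uniq 'I_n.
have me : forall x : 'I_n, x \in enum 'I_n by move=> x; rewrite mem_enum.
have hPG := PG C; have hal := alphaG C; have hPP := Ppath n.
set cm := code (enum 'I_n) C in hPG hal.
have hsize : size cm = n by rewrite size_code size_enum_ord.
have hcount : count id cm = #|C| := count_code C ue me.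
have hnc : nocons cm by move: hmax => /andP [hC _]; rewrite -indep_path.
have hdom := dom_code hmax.
have [r [hr hcm]] := full_struct hnc hdom (ltac:(rewrite hsize; lia)).
have hx1C : (x1 \in C) = head false cm.
  by have := nth_code C x1; rewrite hx1 nth0 => <-.
have hxnC : (xn \in C) = last false cm.
  by rewrite -(nth_code C xn) hxn -nth_last hsize.
have hM : (Mmax cm).+1 = (#|C| + ((x1 \notin C) + (xn \notin C)))%N.
  rewrite hx1C hxnC -hcount; case: hcm => ->.
    by rewrite Mmax_t (M_tail hr) /=; case: (last true r) => /=; lia.
  by rewrite Mmax_ft (M_tail hr) /=; case: (last true r) => /=; lia.
have hW : (Wsum cm != 0)%R ->
    exists k, cm = true :: flatten (nseq k [:: false; false; true]) /\ n = (3 * k + 1)%N.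
  case: hcm => hc; last by rewrite hc Wsum_ft eqxx.
  rewrite hc Wsum_t => /(W_tail hr) [k [hrk _]]; exists k; split; first by rewrite hrk.
  by rewrite -hsize hc hrk /= size_flat; lia.
split; [|split].
- move=> h3.
  have hW0 : Wsum cm = 0%R.
    apply/eqP; apply: contraT => /hW [k [_ hk]]; move: h3; rewrite hk.
    by case=> /eqP; lia.
  have hPn : (Wsum (nseq n false) != 0)%R.
    by apply: Wsum_nseq02; case: h3 => /eqP; auto.
  have hPG0 : ((indep_poly (suspension (path_rel (n:=n)) C)).[-1])%R = Wsum (nseq n false).
    by rewrite hPG hW0 subr0.
  split; first by apply: a_inv_zero; rewrite hPG0.
  rewrite hp_top hPG0 hal Mmax_nseq hPP hM.
  split => h.
    by rewrite h (maxn_idPl (leqnSn _)) exprS mulN1r mulNr.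
  by rewrite (maxn_idPr h).
- move=> k hk hC3.
  have hcm3 : cm = true :: flatten (nseq k [:: false; false; true]).
    by rewrite /cm hC3 code_set3 hk addn1 -(iota3 0 k) muln0.
  have hWc : Wsum cm = ((-1) ^+ k)%R by rewrite hcm3 Wsum_t W_flat.
  have hMc : Mmax cm = k.
    by rewrite hcm3 Mmax_t (M_tail (tailOK_flat k)) count_flat last_flat addn0.
  have hPG0 : ((indep_poly (suspension (path_rel (n:=n)) C)).[-1])%R = (- (-1) ^+ k)%R.
    by rewrite hPG hWc Wsum_nseq1 ?sub0r //; rewrite hk; lia.
  have hal0 : indep_num (suspension (path_rel (n:=n)) C) = uphalf n.
    rewrite hal hMc Mmax_nseq; apply/maxn_idPr.
    by rewrite geq_uphalf_double -mul2n; lia.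
  split; first by apply: a_inv_zero; rewrite hPG0 oppr_eq0 signr_eq0.
  by rewrite hp_top hPG0 hal0 !exprD expr1 mulrN1 mulrN.
- move=> h1 hne.
  have hW0 : Wsum cm = 0%R.
    apply/eqP; apply: contraT => /hW [k [hck hk]].
    case/negP: hne; apply/eqP; apply: (code_inj me).
    by rewrite -/cm hck code_set3 hk addn1 -(iota3 0 k) muln0.
  apply: a_inv_neg; first by rewrite hal leq_max.
  by rewrite hPG hW0 subr0 Wsum_nseq1 //; move/eqP: h1.
Qed.
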